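(* Let ${\mathbb K}$ be a field, $n\geqslant 2$ and $N$ a positive integer. Let $L$ be a set of lines of $\mathrm{AG}_n({\mathbb K})$, let $D\subseteq\mathrm{PG}_{n-1}({\mathbb K})$ be the set of directions of the lines of $L$, and let $S$ be a set of points of $\mathrm{AG}_n({\mathbb K})$ such that every line of $L$ is incident with at least $N$ points of $S$. If $D$ contains an $N^{n-1}$ grid then $$|S|\geqslant\binom{N+n-1}{n}.$$
   Context: The direction of an affine line $\{u+\lambda v:\lambda\in{\mathbb K}\}$ is the point $\langle v\rangle$ of $\mathrm{PG}_{n-1}({\mathbb K})$. An $N^{n-1}$ grid in $\mathrm{PG}_{n-1}({\mathbb K})$ is a point set which, with respect to a suitable basis, has the form $\{\langle(a_1,\ldots,a_{n-1},1)\rangle : a_i\in A_i\}$, where each $A_i\subseteq{\mathbb K}$ has size $N$. *)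

(* Defs.v *)
From mathcomp Require Import all_boot all_order all_algebra.
Set Implicit Arguments. Unset Strict Implicit. Unset Printing Implicit Defensive.
Import GRing.Theory.
Local Open Scope ring_scope.

(* Points of AG_n(K) are row vectors 'rV[K]_n.
   An affine line is given by a parametrisation (u, v) with v <> 0:
   the line {u + lambda v : lambda in K}. *)

Definition on_line (K : fieldType) (n : nat) (uv : 'rV[K]_n * 'rV[K]_n)
  (x : 'rV[K]_n) : Prop :=
  exists lambda : K, x = uv.1 + lambda *: uv.2.

Definition in_directions (K : fieldType) (n : nat)
  (L : 'rV[K]_n * 'rV[K]_n -> Prop) (w : 'rV[K]_n) : Prop :=
  exists uv, L uv /\ exists c : K, c != 0 /\ uv.2 = c *: w.

(* The vector with coordinates (a_1, ..., a_{n-1}, 1) w.r.t. the basis given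
   by the rows of B (coordinates j < n-1 read from f, last coordinate 1). *)
Definition grid_vec (K : fieldType) (n : nat) (B : 'M[K]_n) (f : 'I_n -> K)
  : 'rV[K]_n :=
  (\row_(j < n) (if (j < n.-1)%N then f j else 1)) *m B.

Definition contains_grid (K : fieldType) (n N : nat)
  (L : 'rV[K]_n * 'rV[K]_n -> Prop) : Prop :=
  exists (B : 'M[K]_n) (A : 'I_n -> seq K),
    B \in unitmx /\
    (forall j : 'I_n, (j < n.-1)%N -> uniq (A j) /\ size (A j) = N) /\
    (forall f : 'I_n -> K,
        (forall j : 'I_n, (j < n.-1)%N -> f j \in A j) ->
        in_directions L (grid_vec B f)).

Definition at_least (K : fieldType) (n m : nat) (X : 'rV[K]_n -> Prop) : Prop :=
  exists s : seq 'rV[K]_n, uniq s /\ (forall x, x \in s -> X x) /\ (m <= size s)%N.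

(* Main.v *)
Require Import Defs.
From mathcomp Require Import all_boot all_order all_algebra.
From mathcomp Require Import zify.
From Stdlib Require Import Classical.
Import GRing.Theory.
Set Implicit Arguments. Unset Strict Implicit.
Local Open Scope ring_scope.

Lemma coefM_top (K : fieldType) (p q : {poly K}) a b :
  (size p <= a.+1)%N -> (size q <= b.+1)%N ->
  (size (p * q)%R <= (a + b).+1)%N /\ (p * q)`_(a + b) = p`_a * q`_b.
Proof.
move=> hp hq; split.
  by apply: leq_trans (size_polyMleq _ _) _; lia.
have ha : (a < (a + b).+1)%N by lia.
rewrite coefM (bigD1 (Ordinal ha)) //= addKn big1 ?addr0 //.
move=> j hj; case: (ltngtP j a) => h.
- by rewrite [q`_ _]nth_default ?mulr0 //; apply: leq_trans hq _; lia.
- by rewrite nth_default ?mul0r //; apply: leq_trans hp _.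
- have hj' : j = Ordinal ha by apply: val_inj.
  by rewrite hj' eqxx in hj.
Qed.

Lemma coef_exp_lin (K : fieldType) (x y : K) e :
  (size ((x%:P + y *: 'X) ^+ e)%R <= e.+1)%N /\ ((x%:P + y *: 'X) ^+ e)`_e = y ^+ e.
Proof.
have hl : (size (x%:P + y *: 'X)%R <= 2)%N.
  apply: leq_trans (size_polyD _ _) _; rewrite geq_max.
  apply/andP; split; first by apply: leq_trans (size_polyC_leq1 _) _.
  by apply: leq_trans (size_scale_leq _ _) _; rewrite size_polyX.
elim: e => [|e [IH1 IH2]].
  by rewrite expr0 size_poly1 coef1.
have [h1 h2] := coefM_top IH1 hl.
rewrite exprSr -[e.+1]addn1; split => //.
by rewrite h2 IH2 coefD coefC coefZ coefX /= add0r mulr1 addn1 -exprSr.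
Qed.

Lemma coef_prod_seq (K : fieldType) (I : Type) (r : seq I) (F : I -> {poly K}) (k : I -> nat) :
  (forall i, (size (F i) <= (k i).+1)%N) ->
  (size (\prod_(i <- r) F i)%R <= (\sum_(i <- r) k i).+1)%N /\
  (\prod_(i <- r) F i)`_(\sum_(i <- r) k i) = \prod_(i <- r) (F i)`_(k i).
Proof.
move=> hF; elim: r => [|i r [IH1 IH2]].
  by rewrite !big_nil size_poly1 coef1.
rewrite !big_cons; have [h1 h2] := coefM_top (hF i) IH1.
by split => //; rewrite h2 IH2.
Qed.

Lemma nat_recr_pred (R : Type) (idx : R) (op : Monoid.law idx) n F :
  (0 < n)%N -> \big[op/idx]_(0 <= j < n) F j = op (\big[op/idx]_(0 <= j < n.-1) F j) (F n.-1).
Proof. by case: n => // n _; rewrite big_nat_recr. Qed.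

Lemma sum_count_iota (s : seq nat) m : all (fun x => x < m)%N s ->
  (\sum_(0 <= j < m) count_mem j s)%N = size s.
Proof.
elim: s => [|x s IH] /=.
  by move=> _; rewrite big1.
move=> /andP [xm hs]; rewrite big_split /= IH //.
suff -> : (\sum_(0 <= j < m) (x == j))%N = 1%N by [].
rewrite (eq_bigr (fun j => if j == x then 1 else 0)%N); last first.
  by move=> j _; rewrite eq_sym; case: (j == x).
rewrite -big_mkcond sum1_count /index_iota subn0.
by rewrite (count_uniq_mem _ (iota_uniq 0 m)) mem_iota /= xm.
Qed.

Lemma cover_or (K : fieldType) n (S : 'rV[K]_n -> Prop) m :
  at_least m S \/ exists s, uniq s /\ (forall x, x \in s -> S x) /\
     (forall x, S x -> x \in s) /\ (size s < m)%N.
Proof.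
elim: m => [|m IH].
  by left; exists [::].
case: IH => [[s [us [sS ssz]]]|[s [us [sS [scov ssz]]]]]; last first.
  by right; exists s; split => //; split => //; split => //; lia.
case: (leqP m.+1 (size s)) => hsz.
  by left; exists s.
case: (classic (exists x, S x /\ x \notin s)) => [[x [Sx xs]]|hn].
  left; exists (x :: s); split; first by rewrite /= xs.
  split; last by rewrite /=; lia.
  by move=> y; rewrite inE => /orP [/eqP ->|/sS].
right; exists s; split => //; split => //; split; last exact: hsz.
move=> x Sx; apply/negPn/negP => xs; apply: hn; by exists x.
Qed.

Lemma lift_line (K : fieldType) n (uv : 'rV[K]_n * 'rV[K]_n) (s : seq 'rV[K]_n) :
  (forall x, x \in s -> on_line uv x) ->
  exists ls, s = map (fun l => uv.1 + l *: uv.2) ls.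
Proof.
elim: s => [|x s IH] h; first by exists [::].
have [l hl] := h x (mem_head _ _).
have [ls hls] : exists ls, s = map (fun l => uv.1 + l *: uv.2) ls.
  by apply: IH => y ys; apply: h; rewrite inE ys orbT.
by exists (l :: ls); rewrite /= -hls -hl.
Qed.

Lemma sorted_tuple_inj n N (t t' : N.-tuple 'I_n.+1) :
  sorted leq (map val t) -> sorted leq (map val t') ->
  (forall j, (j <= n)%N -> count_mem j (map val t) = count_mem j (map val t')) -> t = t'.
Proof.
move=> h1 h2 hc.
have hp : perm_eq (map val t) (map val t').
  rewrite /perm_eq; apply/allP => x _; apply/eqP.
  case: (leqP x n) => h; first by apply: hc.
  have z : forall (u : seq 'I_n.+1), count_mem x (map val u) = 0%N.
    move=> u; apply/count_memPn/mapP => [[y _ hy]]; move: (ltn_ord y); rewrite -hy; lia.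
  by rewrite !z.
have := sorted_eq leq_trans anti_leq h1 h2 hp.
by move/(inj_map val_inj) => e; apply: val_inj.
Qed.

Lemma grid_zero (K : fieldType) (N : nat) (A : nat -> seq K) : forall m (I : finType) (P : pred I)
  (e : I -> nat -> nat) (c : I -> K),
 (forall j, (j < m)%N -> uniq (A j) /\ size (A j) = N) ->
 (forall i j, P i -> (j < m)%N -> (e i j < N)%N) ->
 (forall i i', P i -> P i' -> (forall j, (j < m)%N -> e i j = e i' j) -> i = i') ->
 (forall a : nat -> K, (forall j, (j < m)%N -> a j \in A j) ->
    \sum_(i | P i) c i * \prod_(0 <= j < m) a j ^+ e i j = 0) ->
 forall i, P i -> c i = 0.
Proof.
elim=> [|m IH] I P e c hA he hinj hs i0 Pi0.
  have := hs (fun _ => 0) (fun j (hj : (j < 0)%N) => False_ind _ (notF hj)).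
  rewrite (bigD1 i0) //= big_geq // mulr1 big1 ?addr0 //.
  move=> i /andP [Pi ne]; move: ne; by rewrite (hinj i i0 Pi Pi0 (fun j hj => False_ind _ (notF hj))) eqxx.
pose k0 := e i0 m.
apply: (IH I (fun i => P i && (e i m == k0)) e c) => //.
- by move=> j hj; apply: hA; apply: ltnW.
- by move=> i j /andP [Pi _] hj; apply: he => //; apply: ltnW.
- move=> i i' /andP [Pi /eqP ei] /andP [Pi' /eqP ei'] hj; apply: hinj => // j hjm.
  case: (ltngtP j m) => h; [by apply: hj | lia | by rewrite h ei ei'].
2: by rewrite Pi0 eqxx.
move=> a' ha'.
pose Q := \sum_(i | P i) (c i * \prod_(0 <= j < m) a' j ^+ e i j) *: 'X^(e i m).
have Q0 : Q = 0.
  have [uA sA] := hA m (ltnSn m).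
  apply: (roots_geq_poly_eq0 (rs := A m)) => //.
  - apply/allP => x xA; rewrite /root; apply/eqP.
    pose a := fun j => if j == m then x else a' j.
    have := hs a.
    have ha : forall j, (j < m.+1)%N -> a j \in A j.
      move=> j hj; rewrite /a; case: eqP => [->|hjm] //; apply: ha'; lia.
    move/(_ ha) => <-.
    rewrite /Q horner_sum; apply: eq_bigr => i Pi.
    rewrite hornerZ hornerXn big_nat_recr //= -mulrA; congr (_ * (_ * _)).
      apply: eq_big_nat => j /andP [_ hj]; rewrite /a; case: eqP => // ?; lia.
    by rewrite /a eqxx.
  - rewrite sA; apply: (big_ind (fun p : {poly K} => (size p <= N)%N)).
    + by rewrite size_poly0.
    + by move=> p q hp hq; apply: leq_trans (size_polyD _ _) _; rewrite geq_max hp hq.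
    + move=> i Pi; apply: leq_trans (size_scale_leq _ _) _; rewrite size_polyXn.
      exact: he.
have := congr1 (fun p : {poly K} => p`_k0) Q0.
rewrite /= coef0 /Q coef_sum => h; apply: (etrans _ h).
rewrite big_mkcondr /=; apply: eq_bigr => i Pi.
rewrite coefZ coefXn; case: eqP => [->|/eqP hne]; first by rewrite eqxx mulr1.
by rewrite eq_sym (negbTE hne) mulr0.
Qed.

Unset Implicit Arguments.

Theorem theorem3p3 (K : fieldType) (n N : nat)
  (L : 'rV[K]_n * 'rV[K]_n -> Prop) (S : 'rV[K]_n -> Prop) :
  (2 <= n)%N -> (0 < N)%N ->
  (forall uv, L uv -> uv.2 != 0) ->
  (forall uv, L uv -> at_least N (fun x => S x /\ on_line uv x)) ->
  contains_grid N L ->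
  at_least 'C(N + n - 1, n) S.
Proof.
case: n L S => [L S //|n L S] n2 N0 Lnz Lline [B [A [Bu [hA hgrid]]]].
case: (cover_or S 'C(N + n.+1 - 1, n.+1)) => [//|[s [us [sS [scov ssz]]]]].
exfalso.
pose P := [set t : (N.-1).-tuple 'I_n.+2 | sorted leq (map val t)].
have cardP : #|P| = 'C(N + n.+1 - 1, n.+1).
  rewrite card_sorted_tuples -bin_sub; last by lia.
  congr 'C(_, _); lia.
pose phi (x : 'rV[K]_n.+1) := x *m invmx B.
pose e (r : 'I_#|P|) (j : nat) := count_mem j (map val (enum_val r : (N.-1).-tuple 'I_n.+2)).
pose mono (r : 'I_#|P|) (y : 'rV[K]_n.+1) := \prod_(0 <= j < n.+1) (y 0 (inord j)) ^+ e r j.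
pose deg (r : 'I_#|P|) := (\sum_(0 <= j < n.+1) e r j)%N.
have sumall r : (\sum_(0 <= j < n.+2) e r j)%N = N.-1.
  rewrite sum_count_iota ?size_map ?size_tuple //.
  by apply/allP => x /mapP [y _ ->]; apply: ltn_ord.
have degle r : (deg r <= N.-1)%N.
  by rewrite -(sumall r) big_nat_recr //= leq_addr.
pose E := \matrix_(r < #|P|, i < size s) mono r (phi (nth 0 s i)).
have [v vker vnz] : exists2 v : 'rV[K]_#|P|, (v <= kermx E)%MS & v != 0.
  apply/rowV0Pn; rewrite -mxrank_eq0 mxrank_ker.
  have := rank_leq_col E; lia.
have vE : v *m E = 0 by apply/sub_kermxP.
pose c r := v 0 r.
have hF x : S x -> \sum_r c r * mono r (phi x) = 0.
  move=> Sx; have xs := scov x Sx.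
  have hi : (index x s < size s)%N by rewrite index_mem.
  have := congr1 (fun M : 'rV[K]_(size s) => M 0 (Ordinal hi)) vE.
  rewrite /= !mxE => h; apply: (etrans _ h); apply: eq_bigr => r _.
  by rewrite mxE /= nth_index.
have [r0 cr0] : exists r, c r != 0.
  case: (pickP (fun r => c r != 0)) => [r0 hr|h]; first by exists r0.
  exfalso; move/eqP: vnz; apply; apply/rowP => r; rewrite mxE.
  by move: (h r) => /negbFE/eqP.
pose Anz := [pred r | c r != 0].
pose d := \max_(r in Anz) deg r.
have hdle r : c r != 0 -> (deg r <= d)%N.
  by move=> h; apply: (@leq_bigmax_cond _ (fun r => r \in Anz)).
have [r1 r1A degr1] : exists2 r1, r1 \in Anz & d = deg r1.
  have h0 : (0 < #|Anz|)%N by apply/card_gt0P; exists r0.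
  by case: (eq_bigmax_cond deg h0) => r1 h1 h2; exists r1.
pose G (y : 'rV[K]_n.+1) := \sum_(r | deg r == d) c r * mono r y.
have hG uv : L uv -> G (phi uv.2) = 0.
  move=> Luv.
  pose p := phi uv.1; pose q := phi uv.2.
  pose l j := (p 0 (inord j))%:P + (q 0 (inord j)) *: 'X.
  pose Pl := \sum_r c r *: \prod_(0 <= j < n.+1) (l j) ^+ e r j.
  have hcoef r : (size (\prod_(0 <= j < n.+1) (l j) ^+ e r j)%R <= (deg r).+1)%N /\
      (\prod_(0 <= j < n.+1) (l j) ^+ e r j)`_(deg r) = mono r q.
    have := @coef_prod_seq K nat (index_iota 0 n.+1) (fun j => l j ^+ e r j) (e r).
    case=> [j|h1 h2]; first by case: (coef_exp_lin (p 0 (inord j)) (q 0 (inord j)) (e r j)).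
    split => //; rewrite h2; apply: eq_bigr => j _.
    by case: (coef_exp_lin (p 0 (inord j)) (q 0 (inord j)) (e r j)).
  have Pl0 : Pl = 0.
    have [s' [us' [s'S szs']]] := Lline uv Luv.
    have [ls hls] := lift_line (fun x hx => (s'S x hx).2).
    apply: (roots_geq_poly_eq0 (rs := ls)).
    - apply/allP => t tls; rewrite /root; apply/eqP.
      have hx : uv.1 + t *: uv.2 \in s' by rewrite hls; apply: map_f.
      rewrite -(hF _ (s'S _ hx).1) /Pl horner_sum; apply: eq_bigr => r _.
      rewrite hornerZ horner_prod; congr (_ * _); apply: eq_bigr => j _.
      rewrite horner_exp hornerD hornerC hornerZ hornerX /phi mulmxDl -scalemxAl.
      by rewrite !mxE mulrC.
    - by move: us'; rewrite hls => /map_uniq.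
    - have -> : size ls = size s' by rewrite hls size_map.
      apply: leq_trans _ szs'.
      apply: (big_ind (fun p : {poly K} => (size p <= N)%N)).
      + by rewrite size_poly0.
      + by move=> p1 p2 h1 h2; apply: leq_trans (size_polyD _ _) _; rewrite geq_max h1 h2.
      + move=> r _; apply: leq_trans (size_scale_leq _ _) _.
        apply: leq_trans (hcoef r).1 _; have := degle r; lia.
  have := congr1 (fun p : {poly K} => p`_d) Pl0.
  rewrite /= coef0 /Pl coef_sum => h; apply: (etrans _ h).
  rewrite /G big_mkcond /=; apply: eq_bigr => r _.
  rewrite coefZ; case: (ltngtP (deg r) d) => hd.
  - rewrite nth_default ?mulr0 //; apply: leq_trans (hcoef r).1 _; exact: hd.
  - case: (eqVneq (c r) 0) => [->|/hdle]; first by rewrite !mul0r.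
    lia.
  - by rewrite -hd (hcoef r).2.
have degE r : deg r = (\sum_(0 <= j < n) e r j + e r n)%N by rewrite /deg big_nat_recr.
have key : forall r, deg r == d -> c r = 0.
  apply: (@grid_zero K N (fun j => A (inord j)) n _ (fun r => deg r == d) e c).
  - move=> j hj; have := hA (inord j); rewrite inordK; last by lia.
    by apply.
  - move=> r j _ _; apply: leq_ltn_trans (count_size _ _) _.
    by rewrite size_map size_tuple; lia.
  - move=> r r' /eqP dr /eqP dr' hj; apply: enum_val_inj.
    have sr := enum_valP r; have sr' := enum_valP r'.
    rewrite inE in sr; rewrite inE in sr'.
    apply: sorted_tuple_inj => // j hjn.
    case: (ltngtP j n) => hjn'; first by apply: hj.
    + have jn : j = n.+1 by lia.
      have h1 := sumall r; have h2 := sumall r'.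
      rewrite big_nat_recr //= -/(deg r) in h1.
      rewrite big_nat_recr //= -/(deg r') in h2.
      rewrite jn; change (e r n.+1 = e r' n.+1); lia.
    + have h1 := degE r; have h2 := degE r'.
      have hs : (\sum_(0 <= j < n) e r j)%N = (\sum_(0 <= j < n) e r' j)%N.
        by apply: eq_big_nat => i /andP [_ hi]; apply: hj.
      move=> {hj}; rewrite hjn'; change (e r n = e r' n); lia.
  - move=> a ha.
    pose f := fun j : 'I_n.+1 => a j.
    have hf : forall j : 'I_n.+1, (j < n.+1.-1)%N -> f j \in A j.
      by move=> j hj; have := ha j hj; rewrite inord_val.
    have [uv [Luv [c' [c'nz huv]]]] := hgrid f hf.
    have := hG uv Luv.
    rewrite huv /phi /grid_vec -scalemxAl mulmxK //.
    set w := \row_j _.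
    have -> : G (c' *: w) = c' ^+ d * \sum_(r | deg r == d) c r * \prod_(0 <= j < n) a j ^+ e r j.
      rewrite /G mulr_sumr; apply: eq_bigr => r /eqP dr.
      rewrite /mono (eq_bigr (fun j => c' ^+ e r j * (w 0 (inord j)) ^+ e r j)); last first.
        by move=> j _; rewrite mxE exprMn.
      rewrite big_split /= prodrXr.
      change (\sum_(0 <= j < n.+1) e r j)%N with (deg r); rewrite dr.
      rewrite big_nat_recr //= {2}/w mxE inordK // ltnn expr1n mulr1 mulrCA.
      congr (_ * (_ * _)); apply: eq_big_nat => j /andP [_ hj].
      have hj' : (j < n.+1)%N by lia.
      by rewrite /w mxE (inordK hj') hj /f (inordK hj').
    move/eqP; rewrite mulf_eq0 expf_eq0 (negbTE c'nz) andbF /=.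
    by move/eqP.
by move: r1A; rewrite inE key ?eqxx // -degr1.
Qed.
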